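(* In the two-door cascading memoryless semi-fractional setting, for every $x\in[0,1]$, every real $t\ge0$ and every semi-fractional sequence $\pi$, letting $y=x/(q_2+p_2x)$, $$\mathbb{E}_x[1^t\cdot\pi]=t+\mathbb{E}_{q_1^tx}[\pi],\qquad \mathbb{E}_x[2\cdot\pi]=c+\frac{x}{y}\,\mathbb{E}_y[\pi].$$
   Context: Two cascading memoryless doors with durations: parameters $p_1,p_2\in(0,1)$, $q_1=1-p_1$, $q_2=1-p_2$, and $c>0$. A semi-fractional sequence is an infinite sequence of knocks of the form $1^t$ ($t\ge0$ real) and $2$ (consecutive 1-knocks $1^a1^b$ being identified with $1^{a+b}$). A 1-knock $1^t$ takes $t$ time units and, if door 1 is closed, opens it with probability $1-q_1^t$, independently of everything else. A 2-knock takes $c$ time units and opens door 2 with probability $p_2$ (independently) if door 1 is open at that time, and with probability $0$ otherwise. There is no feedback; the running time is the time at which both doors are open. For $x\in[0,1]$, $\mathbb{E}_x[\pi]$ denotes the expected running time of $\pi$ when started with door 2 closed and door 1 closed with probability $x$ (open with probability $1-x$); $\mathbb{E}[\pi]=\mathbb{E}_1[\pi]$. For a knock $a$ and a sequence $\pi$, $a\cdot\pi$ is the sequence starting with $a$ followed by $\pi$. *)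

(* Defs.v *)
From Stdlib Require Import Reals.
From Coquelicot Require Import Coquelicot.
Open Scope R_scope.

(* A knock: [K1 t] is the 1-knock 1^t, [K2] is the 2-knock. *)
Inductive knock : Type := K1 (t : R) | K2.

(* Consecutive 1-knocks are not merged syntactically; every notion
   below is invariant under merging 1^a 1^b = 1^(a+b) (Rpower_plus). *)
Definition kseq := nat -> knock.

Definition semifrac (pi : kseq) : Prop :=
  forall n t, pi n = K1 t -> 0 <= t.

Definition kcons (k : knock) (pi : kseq) : kseq :=
  fun n => match n with O => k | S m => pi m end.

Definition dur (c : R) (k : knock) : R :=
  match k with K1 t => t | K2 => c end.

Definition Dn (c : R) (pi : kseq) (n : nat) : R :=
  sum_f_R0 (fun i => dur c (pi i)) n.

(* Distribution of the state just before knock n (door 2 still closed):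
   (P[door 1 closed, door 2 closed], P[door 1 open, door 2 closed]).
   Initially door 1 closed with probability x, door 2 closed.
   A knock 1^t opens a closed door 1 with probability 1 - q1^t;
   a 2-knock opens door 2 with probability p2 if door 1 is open, else 0.
   Knocks act independently (Markov transitions). *)
Fixpoint st (p1 p2 x : R) (pi : kseq) (n : nat) : R * R :=
  match n with
  | O => (x, 1 - x)
  | S m =>
      let ab := st p1 p2 x pi m in
      match pi m with
      | K1 t => (fst ab * Rpower (1 - p1) t,
                 snd ab + fst ab * (1 - Rpower (1 - p1) t))
      | K2 => (fst ab, snd ab * (1 - p2))
      end
  end.

(* P[running time = Dn n, attained by knock n]: both doors become open
   exactly at the end of knock n. *)
Definition pT (p1 p2 x : R) (pi : kseq) (n : nat) : R :=
  match pi n with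
  | K1 _ => 0
  | K2 => snd (st p1 p2 x pi n) * p2
  end.

(* Expected running time E_x[pi] in [0, +oo]:
   sum_n P[T = Dn n] * Dn n  +  (+oo) * P[door 2 never opens]
   (with the convention 0 * (+oo) = 0 of Rbar_mult). *)
Definition Ex (p1 p2 c x : R) (pi : kseq) : Rbar :=
  Rbar_plus
    (Lim_seq (fun N => sum_f_R0 (fun n => pT p1 p2 x pi n * Dn c pi n) N))
    (Rbar_mult
       (Lim_seq (fun n => fst (st p1 p2 x pi n) + snd (st p1 p2 x pi n)))
       p_infty).

(* Main.v *)
Require Import Defs.
From Stdlib Require Import Reals Lra.
From Coquelicot Require Import Coquelicot.
Open Scope R_scope.

Lemma mult_pinf (s : R) : 0 < s -> Rbar_mult s p_infty = p_infty.
Proof.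
  intros Hs. rewrite Rbar_mult_comm. apply is_Rbar_mult_unique.
  apply is_Rbar_mult_p_infty_pos. simpl. lra.
Qed.

Lemma final (K s d L : R) (Sq Aq : nat -> R) :
  0 < s -> 0 <= L -> K + s*d = d -> is_lim_seq Sq (1 - L) ->
  (forall n, Aq n <= Aq (S n)) ->
  Rbar_plus (Lim_seq (fun N => K + s*(d*Sq N + Aq N))) (Rbar_mult (s*L) p_infty)
  = Rbar_plus d (Rbar_mult s (Rbar_plus (Lim_seq Aq) (Rbar_mult L p_infty))).
Proof.
  intros Hs HL HK HS HA.
  assert (HAl : is_lim_seq Aq (Lim_seq Aq)) by (apply Lim_seq_correct, ex_lim_seq_incr, HA).
  assert (HA0 : forall n, Aq 0%nat <= Aq n).
  { induction n. lra. specialize (HA n). lra. }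
  assert (Hdl : is_lim_seq (fun N => d * Sq N) (d * (1 - L))).
  { apply (is_lim_seq_scal_l Sq d (Finite (1 - L))) in HS. exact HS. }
  destruct (Lim_seq Aq) as [a| |] eqn:E.
  - assert (H : is_lim_seq (fun N => K + s*(d*Sq N + Aq N)) (K + s*(d*(1-L) + a))).
    { apply is_lim_seq_plus'. apply is_lim_seq_const.
      apply (is_lim_seq_scal_l _ s (Finite (d*(1-L)+a))).
      apply is_lim_seq_plus'; assumption. }
    rewrite (is_lim_seq_unique _ _ H).
    destruct (Rle_lt_or_eq_dec 0 L HL) as [Lp|L0].
    + rewrite !mult_pinf; try nra. reflexivity.
    + subst L. rewrite Rmult_0_r, Rbar_mult_0_l. simpl. f_equal.
      assert (K = d - s*d) by lra. subst K. ring.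
  - assert (H : is_lim_seq (fun N => K + s*(d*Sq N + Aq N)) p_infty).
    { apply (is_lim_seq_plus _ _ K p_infty). apply is_lim_seq_const.
      replace p_infty with (Rbar_mult s p_infty) by (apply mult_pinf; lra).
      apply is_lim_seq_scal_l.
      apply (is_lim_seq_plus _ _ (d*(1-L)) p_infty). assumption. assumption.
      reflexivity. reflexivity. }
    rewrite (is_lim_seq_unique _ _ H).
    destruct (Rle_lt_or_eq_dec 0 L HL) as [Lp|L0].
    + rewrite !mult_pinf; try nra. reflexivity.
    + subst L. rewrite Rmult_0_r, Rbar_mult_0_l. replace (Rbar_plus p_infty 0) with p_infty by reflexivity. replace (Rbar_plus p_infty 0) with p_infty by reflexivity. rewrite mult_pinf by lra. reflexivity.
  - exfalso. assert (H := is_lim_seq_le (fun _ => Aq 0%nat) Aq (Aq 0%nat) m_infty HA0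
       (is_lim_seq_const _) HAl). simpl in H. exact H.
Qed.

Lemma mult1 (e : Rbar) : Rbar_mult 1 e = e.
Proof.
  destruct e as [r| |]; simpl.
  - f_equal. ring.
  - destruct Rle_dec as [h|h]; [destruct Rle_lt_or_eq_dec|]; auto; lra.
  - destruct Rle_dec as [h|h]; [destruct Rle_lt_or_eq_dec|]; auto; lra.
Qed.

Section S.
Variables p1 p2 c : R.
Hypothesis hp1 : 0 < p1 < 1.
Hypothesis hp2 : 0 < p2 < 1.
Hypothesis hc : 0 < c.

Definition alive x pi n := fst (st p1 p2 x pi n) + snd (st p1 p2 x pi n).
Definition Aq x pi N := sum_f_R0 (fun n => pT p1 p2 x pi n * Dn c pi n) N.
Definition Sm x pi N := sum_f_R0 (fun n => pT p1 p2 x pi n) N.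

Lemma sum_S f n : sum_f_R0 f (S n) = sum_f_R0 f n + f (S n).
Proof. reflexivity. Qed.

Lemma st_S x pi n : st p1 p2 x pi (S n) =
  let ab := st p1 p2 x pi n in
      match pi n with
      | K1 t => (fst ab * Rpower (1 - p1) t,
                 snd ab + fst ab * (1 - Rpower (1 - p1) t))
      | K2 => (fst ab, snd ab * (1 - p2))
      end.
Proof. reflexivity. Qed.

Lemma Rpower_bounds t : 0 <= t -> 0 < Rpower (1 - p1) t <= 1.
Proof.
  intros Ht. split. unfold Rpower. apply exp_pos.
  replace 1 with (Rpower 1 t) at 2.
  apply Rle_Rpower_l; lra.
  unfold Rpower. rewrite ln_1, Rmult_0_r. apply exp_0.
Qed.

Lemma st_nonneg x pi : 0 <= x <= 1 -> semifrac pi ->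
  forall n, 0 <= fst (st p1 p2 x pi n) /\ 0 <= snd (st p1 p2 x pi n).
Proof.
  intros Hx Hpi n. induction n.
  - simpl. lra.
  - rewrite st_S. cbv zeta. destruct (pi n) eqn:E.
    + assert (Ht := Hpi n t E). pose proof (Rpower_bounds t Ht). simpl. nra.
    + simpl. nra.
Qed.

Lemma pT_nonneg x pi : 0 <= x <= 1 -> semifrac pi -> forall n, 0 <= pT p1 p2 x pi n.
Proof.
  intros Hx Hpi n. unfold pT. destruct (pi n). lra.
  pose proof (st_nonneg x pi Hx Hpi n). nra.
Qed.

Lemma Dn_nonneg pi : semifrac pi -> forall n, 0 <= Dn c pi n.
Proof.
  intros Hpi n. induction n.
  - unfold Dn. simpl. destruct (pi 0%nat) eqn:E. simpl. exact (Hpi _ _ E). simpl; lra.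
  - unfold Dn in *. rewrite sum_S. destruct (pi (S n)) eqn:E; simpl.
    pose proof (Hpi _ _ E). lra. lra.
Qed.

Lemma alive_S x pi n : alive x pi (S n) = alive x pi n - pT p1 p2 x pi n.
Proof.
  unfold alive, pT. rewrite st_S. cbv zeta. destruct (pi n); simpl; ring.
Qed.

Lemma Sm_eq x pi N : Sm x pi N = 1 - alive x pi (S N).
Proof.
  induction N.
  - unfold Sm. simpl sum_f_R0. rewrite alive_S. unfold alive. simpl. ring.
  - unfold Sm in *. rewrite sum_S, IHN, (alive_S x pi (S N)). ring.
Qed.

Lemma alive_lim x pi : 0 <= x <= 1 -> semifrac pi ->
  exists L, 0 <= L /\ is_lim_seq (alive x pi) L /\ is_lim_seq (Sm x pi) (1 - L).
Proof.
  intros Hx Hpi.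
  assert (Hd : forall n, alive x pi (S n) <= alive x pi n).
  { intros n. rewrite alive_S. pose proof (pT_nonneg x pi Hx Hpi n). lra. }
  assert (Hp : forall n, 0 <= alive x pi n).
  { intros n. unfold alive. pose proof (st_nonneg x pi Hx Hpi n). lra. }
  destruct (ex_finite_lim_seq_decr _ 0 Hd Hp) as [L HL].
  exists L. split; [|split].
  - assert (H := is_lim_seq_le (fun _ => 0) (alive x pi) 0 L Hp (is_lim_seq_const _) HL).
    simpl in H. exact H.
  - exact HL.
  - apply is_lim_seq_ext with (u := fun N => 1 - alive x pi (S N)).
    intros; symmetry; apply Sm_eq.
    apply (is_lim_seq_minus' (fun _ => 1) (fun N => alive x pi (S N))).
    apply is_lim_seq_const. apply (is_lim_seq_incr_1 (alive x pi)). exact HL.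
Qed.

Lemma shift k pi x y s : semifrac pi -> 0 <= y <= 1 -> 0 < s -> 0 <= dur c k ->
  pT p1 p2 x (kcons k pi) 0 + s = 1 ->
  (forall n, st p1 p2 x (kcons k pi) (S n) = (s * fst (st p1 p2 y pi n), s * snd (st p1 p2 y pi n))) ->
  Ex p1 p2 c x (kcons k pi) = Rbar_plus (dur c k) (Rbar_mult s (Ex p1 p2 c y pi)).
Proof.
  intros Hpi Hy Hs Hd H0 Hst.
  assert (HpT : forall n, pT p1 p2 x (kcons k pi) (S n) = s * pT p1 p2 y pi n).
  { intros n. unfold pT. change (kcons k pi (S n)) with (pi n). rewrite Hst.
    destruct (pi n); simpl; ring. }
  assert (HDn : forall n, Dn c (kcons k pi) (S n) = dur c k + Dn c pi n).
  { induction n. reflexivity. unfold Dn in *. rewrite sum_S, IHn, sum_S. simpl. ring. }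
  destruct (alive_lim y pi Hy Hpi) as [L [HL0 [HL HS]]].
  unfold Ex.
  rewrite <- (Lim_seq_incr_1 (fun N => sum_f_R0 _ N)).
  rewrite <- (Lim_seq_incr_1 (fun n => fst (st p1 p2 x (kcons k pi) n) + _)).
  rewrite (Lim_seq_ext _ (fun N => pT p1 p2 x (kcons k pi) 0 * dur c k
             + s * (dur c k * Sm y pi N + Aq y pi N))).
  2:{ intros N. induction N.
      - change (sum_f_R0 ?f 1) with (f 0%nat + f 1%nat). cbv beta. rewrite HpT, HDn.
        unfold Sm, Aq. simpl sum_f_R0. change (Dn c (kcons k pi) 0) with (dur c k). ring.
      - rewrite sum_S, IHN, HpT, HDn. unfold Sm, Aq. rewrite !sum_S. ring. }
  rewrite (Lim_seq_ext (fun n => fst (st p1 p2 x (kcons k pi) (S n)) + snd (st p1 p2 x (kcons k pi) (S n))) (fun n => s * alive y pi n)).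
  2:{ intros n. rewrite Hst. unfold alive. simpl. ring. }
  change (Lim_seq (fun N => sum_f_R0 (fun n => pT p1 p2 y pi n * Dn c pi n) N)) with (Lim_seq (Aq y pi)).
  change (Lim_seq (fun n => fst (st p1 p2 y pi n) + snd (st p1 p2 y pi n))) with (Lim_seq (alive y pi)).
  rewrite Lim_seq_scal_l. rewrite (is_lim_seq_unique _ _ HL).
  change (Rbar_mult s (Finite L)) with (Finite (s * L)).
  apply final; auto.
  replace s with (1 - pT p1 p2 x (kcons k pi) 0) by lra. ring.
  intros n. unfold Aq. rewrite sum_S.
  pose proof (pT_nonneg y pi Hy Hpi (S n)). pose proof (Dn_nonneg pi Hpi (S n)). nra.
Qed.

End S.

Theorem mainTheorem12 (p1 p2 c : R)
  (hp1 : 0 < p1 < 1) (hp2 : 0 < p2 < 1) (hc : 0 < c) :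
  forall x : R, 0 <= x <= 1 ->
  forall pi : kseq, semifrac pi ->
    (forall t : R, 0 <= t ->
       Ex p1 p2 c x (kcons (K1 t) pi)
       = Rbar_plus t (Ex p1 p2 c (Rpower (1 - p1) t * x) pi))
    /\
    (let y := x / ((1 - p2) + p2 * x) in
       Ex p1 p2 c x (kcons K2 pi)
       = Rbar_plus c (Rbar_mult ((1 - p2) + p2 * x) (Ex p1 p2 c y pi))).
Proof.
  intros x Hx pi Hpi. split.
  - intros t Ht. pose proof (Rpower_bounds p1 hp1 t Ht) as Hq.
    rewrite (shift p1 p2 c hp1 hp2 hc (K1 t) pi x (Rpower (1 - p1) t * x) 1); auto.
    + rewrite mult1. reflexivity.
    + nra.
    + lra.
    + unfold pT. simpl. lra.
    + intros n. induction n.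
      * rewrite st_S. simpl. f_equal; ring.
      * rewrite st_S. change (kcons (K1 t) pi (S n)) with (pi n). rewrite IHn.
        rewrite (st_S p1 p2 _ pi n). destruct (pi n); simpl; f_equal; ring.
  - intros y.
    assert (Hs : 0 < 1 - p2 + p2 * x) by nra.
    apply (shift p1 p2 c hp1 hp2 hc K2 pi x y); auto.
    + unfold y. split. apply Rdiv_le_0_compat; lra.
      apply Rmult_le_reg_r with (1 - p2 + p2 * x). lra.
      unfold Rdiv. rewrite Rmult_assoc, Rinv_l by lra. nra.
    + simpl. lra.
    + unfold pT. simpl. ring.
    + intros n. induction n.
      * rewrite st_S. simpl. unfold y. f_equal; field; lra.
      * rewrite st_S. change (kcons K2 pi (S n)) with (pi n). rewrite IHn.
        rewrite (st_S p1 p2 _ pi n). destruct (pi n); simpl; f_equal; ring.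
Qed.
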